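(* Let $\theta=(\gamma,\mu,\sigma)\in\mathbb{R}\times\mathbb{R}\times(0,\infty)$ and $x\in\mathbb{R}$ with $1+\gamma z>0$, where $z=(x-\mu)/\sigma$, and let $u=u_\gamma(z)$. If $\gamma\ge0$ and $z\ge0$, then, with $\gamma^{-2}\log(1+\gamma z)$ and $\gamma^{-1}$ interpreted as $+\infty$ when $\gamma=0$, \[|\partial_\gamma\ell_\theta(x)|\le\max\Big\{\min\Big(\frac{z^2}{2},\frac1{\gamma^2}\log(1+\gamma z)\Big),\ \min\Big(z,\frac1\gamma\Big)\Big\}.\] If $\gamma\le0$ and $z\ge0$, then $|\partial_\gamma\ell_\theta(x)|\le\frac{\max(z^2,z)}{1+\gamma z}$. If $\gamma\ge0$ and $z\le0$, then $|\partial_\gamma\ell_\theta(x)|\le u^{1+\gamma}\max\{(\log u)^2,\log u\}$. If $\gamma\le0$ and $z\le0$, then $|\partial_\gamma\ell_\theta(x)|\le u\max\{(\log u)^2,\log u\}$.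
   Context: $u_\gamma(z)=(1+\gamma z)^{-1/\gamma}$ for $\gamma\ne0$ and $e^{-z}$ for $\gamma=0$. $\ell_\theta(x)=-\log\sigma-u+(\gamma+1)\log u$ is the GEV log-density on $\{1+\gamma z>0\}$ (GEV density $p_\theta(x)=\sigma^{-1}e^{-u}u^{\gamma+1}\mathbf 1(1+\gamma z>0)$). Its partial derivative in $\gamma$ is $\partial_\gamma\ell_\theta(x)=(1-u)\,\partial_\gamma\log u-\frac{z}{1+\gamma z}$, where $\partial_\gamma\log u=\int_0^z\frac{t}{(1+\gamma t)^2}dt$ (equal to $\frac1\gamma(\frac1\gamma\log(1+\gamma z)-\frac{z}{1+\gamma z})$ for $\gamma\ne0$ and $z^2/2$ for $\gamma=0$). *)

(* Defs.v *)
From Stdlib Require Import Reals.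
Open Scope R_scope.

Definition u_gam (g z : R) : R :=
  if Req_EM_T g 0 then exp (- z) else Rpower (1 + g * z) (- / g).

(* d/dgamma log u_gamma(z) = int_0^z t/(1+gamma t)^2 dt, in closed form. *)
Definition dlogu (g z : R) : R :=
  if Req_EM_T g 0 then z ^ 2 / 2
  else / g * (/ g * ln (1 + g * z) - z / (1 + g * z)).

Definition zstd (mu sigma x : R) : R := (x - mu) / sigma.

(* partial derivative in gamma of the GEV log-density l_theta(x),
   theta = (gamma, mu, sigma):  (1 - u) d_gamma log u - z/(1 + gamma z). *)
Definition dgamma_ell (g mu sigma x : R) : R :=
  let z := zstd mu sigma x in
  (1 - u_gam g z) * dlogu g z - z / (1 + g * z).

(* Main.v *)
Require Import Defs.
From Coquelicot Require Import Coquelicot.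
From Stdlib Require Import Reals Lra Psatz.
Open Scope R_scope.
Lemma mono (f df : R -> R) a b : a <= b ->
  (forall x, a <= x <= b -> is_derive f x (df x)) ->
  (forall x, a <= x <= b -> 0 <= df x) -> f a <= f b.
Proof.
  intros Hab Hd Hp.
  destruct (MVT_gen f a b df) as [c [Hc Hf]].
  - intros x Hx. apply Hd. rewrite Rmin_left in Hx by lra. rewrite Rmax_right in Hx by lra. lra.
  - intros x Hx. rewrite Rmin_left in Hx by lra. rewrite Rmax_right in Hx by lra.
    apply derivable_continuous_pt. exists (df x). apply is_derive_Reals, Hd. lra.
  - rewrite Rmin_left in Hc by lra. rewrite Rmax_right in Hc by lra.
    assert (0 <= df c * (b - a)) by (apply Rmult_le_pos; [apply Hp; lra | lra]). lra.
Qed.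
Lemma F1 a : 0 < a -> ln a <= a - 1.
Proof. intros H. pose proof (exp_ineq1_le (ln a)). rewrite exp_ln in H0 by lra. lra. Qed.
Lemma F2 a : 0 < a -> a * ln a >= a - 1.
Proof. intros H. pose proof (F1 (/ a) ltac:(apply Rinv_0_lt_compat; lra)).
  rewrite ln_Rinv in H0 by lra.
  assert (a * (- ln a) <= a * (/a - 1)) by (apply Rmult_le_compat_l; lra).
  replace (a * (/a - 1)) with (1 - a) in H1 by (field; lra). lra. Qed.
Lemma F3 w : 0 <= w -> ln (1 + w) - w / (1 + w) <= w ^ 2 / 2.
Proof. intros Hw.
  pose proof (mono (fun w => w / (1 + w) + w ^ 2 / 2 - ln (1 + w))
     (fun x => / (1+x)^2 + x - / (1+x)) 0 w Hw) as H.
  cbv beta in H. rewrite Rplus_0_r, ln_1 in H.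
  assert (0 / 1 + 0 ^ 2 / 2 - 0 <= w / (1 + w) + w ^ 2 / 2 - ln (1 + w)); [|lra].
  apply H.
  - intros x Hx. auto_derive. lra. field. lra.
  - intros x Hx. replace (/ (1 + x) ^ 2 + x - / (1 + x)) with (x*x*(2+x) * / (1+x)^2) by (field; lra).
    apply Rmult_le_pos. nra. apply Rlt_le, Rinv_0_lt_compat. nra.
Qed.
Lemma caseg g z : g <> 0 -> 0 < 1 + g * z ->
  let u := Rpower (1 + g * z) (- / g) in
  let L := / g * (/ g * ln (1 + g * z) - z / (1 + g * z)) in
  let d := Rabs ((1 - u) * L - z / (1 + g * z)) in
  (0 < g -> 0 <= z -> d <= Rmax (Rmin (z ^ 2 / 2) (/ g ^ 2 * ln (1 + g * z))) (Rmin z (/ g))) /\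
  (g <= 0 -> 0 <= z -> d <= Rmax (z ^ 2) z / (1 + g * z)) /\
  (0 <= g -> z <= 0 -> d <= Rpower u (1 + g) * Rmax (ln u ^ 2) (ln u)) /\
  (g <= 0 -> z <= 0 -> d <= u * Rmax (ln u ^ 2) (ln u)).
Proof.
  intros Hg Ha u L d. unfold d.
  assert (HF3 := F3 (g * z)).
  set (a := 1 + g * z) in *. pose proof (F1 a Ha) as HF1. pose proof (F2 a Ha) as HF2.
  set (Lam := ln a) in *.
  set (q := z / a) in *.
  assert (Hq : q * a = z) by (unfold q; field; lra).
  assert (HL : g ^ 2 * L = Lam - g * q) by (unfold L, q; field; lra).
  assert (Hg2 : 0 < g ^ 2) by (apply pow2_gt_0; auto).
  set (l := - / g * Lam).
  assert (Hgl : g * l = - Lam) by (unfold l; field; auto).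
  assert (Hu : u = exp l) by reflexivity.
  assert (Hlu : ln u = l) by (rewrite Hu; apply ln_exp).
  rewrite Hlu.
  assert (Hup : 0 < u) by (rewrite Hu; apply exp_pos).
  assert (He1 : u >= 1 + l) by (rewrite Hu; pose proof (exp_ineq1_le l); lra).
  assert (He2 : u * exp (- l) = 1) by (rewrite Hu, <- exp_plus; replace (l + - l) with 0 by ring; apply exp_0).
  assert (He3 : exp (- l) >= 1 - l) by (pose proof (exp_ineq1_le (- l)); lra).
  assert (HL0 : 0 <= L).
  { assert (a * (Lam - g * q) >= 0) by (replace (a * (Lam - g * q)) with (a * Lam - g * z) by (rewrite <- Hq; ring); unfold a in *; lra).
    assert (0 <= Lam - g * q).
    { destruct (Rle_or_lt 0 (Lam - g * q)); auto. nra. }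
    nra. }
  split; [|split; [|split]]; intros Hs Hz.
  -
    assert (Ha1 : 1 <= a) by (unfold a; nra).
    assert (HLam : 0 <= Lam) by (destruct (Rle_or_lt 0 Lam); auto; nra).
    assert (Hl0 : l <= 0) by (destruct (Rle_or_lt l 0); auto; nra).
    assert (Hu1 : u <= 1) by nra.
    assert (HLz : L <= z ^ 2 / 2).
    { assert (g ^ 2 * L <= g ^ 2 * (z ^ 2 / 2)) by (rewrite HL; unfold q; nra). nra. }
    assert (HLl : L <= / g ^ 2 * Lam).
    { replace L with (/ g ^ 2 * (g ^ 2 * L)) by (field; auto). rewrite HL.
      apply Rmult_le_compat_l. left; apply Rinv_0_lt_compat; auto. nra. }
    assert (Hq0 : 0 <= q) by nra.
    assert (Hqz : q <= z) by nra.
    assert (Hqg : q <= / g).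
    { assert (g * q <= 1).
      { assert ((g * q - 1) * a = - 1) by (replace ((g * q - 1) * a) with (g * (q * a) - a) by ring; rewrite Hq; unfold a; ring).
        destruct (Rle_or_lt (g * q) 1); auto. nra. } replace q with (/ g * (g * q)) by (field; lra).
      rewrite <- (Rmult_1_r (/ g)) at 2. apply Rmult_le_compat_l; [left; apply Rinv_0_lt_compat|]; lra. }
    pose proof (Rmin_glb _ _ _ HLz HLl). pose proof (Rmin_glb _ _ _ Hqz Hqg).
    pose proof (Rmax_l (Rmin (z ^ 2 / 2) (/ g ^ 2 * Lam)) (Rmin z (/ g))).
    pose proof (Rmax_r (Rmin (z ^ 2 / 2) (/ g ^ 2 * Lam)) (Rmin z (/ g))).
    apply Rabs_le. split; nra.
  -
    assert (Hgn : g < 0) by lra.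
    assert (Ha1 : a <= 1) by (unfold a; nra).
    assert (HLam : Lam <= 0) by lra.
    assert (Hl0 : l <= 0) by (destruct (Rle_or_lt l 0); auto; nra).
    assert (Hu1 : u <= 1) by nra.
    assert (Hq0 : 0 <= q) by nra.
    assert (HLz : a * L <= z ^ 2).
    { assert (g ^ 2 * (a * L) <= g ^ 2 * z ^ 2); [|nra].
      replace (g ^ 2 * (a * L)) with (a * (g ^ 2 * L)) by ring. rewrite HL.
      unfold a in *; nra. }
    pose proof (Rmax_l (z ^ 2) z). pose proof (Rmax_r (z ^ 2) z).
    set (M := Rmax _ _) in *.
    assert (HM : M / a * a = M) by (field; lra).
    set (m := M / a) in *.
    assert (Hqm : q <= m) by (destruct (Rle_or_lt q m); auto; nra).
    assert (HLm : L <= m) by (destruct (Rle_or_lt L m); auto; nra).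
    assert (0 <= (1 - u) * L <= L) by (split; nra).
    apply Rabs_le. split; nra.
  -
    destruct (Req_dec g 0) as [|Hgp]; [contradiction|].
    assert (Hgp' : 0 < g) by lra.
    assert (Ha1 : a <= 1) by (unfold a; nra).
    assert (HLam : Lam <= 0) by lra.
    assert (Hl0 : 0 <= l) by (destruct (Rle_or_lt 0 l); auto; nra).
    assert (Hu1 : 1 <= u) by nra.
    assert (HP : Rpower u (1 + g) * a = u).
    { unfold Rpower. rewrite Hlu. replace ((1 + g) * l) with (l + - Lam) by (rewrite <- Hgl; ring).
      rewrite exp_plus, exp_Ropp. unfold Lam. rewrite exp_ln by lra. rewrite <- Hu. field. lra. }
    set (P := Rpower u (1 + g)) in *.
    assert (HP0 : 0 < P) by nra.
    pose proof (Rmax_l (l ^ 2) l). pose proof (Rmax_r (l ^ 2) l).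
    set (M := Rmax _ _) in *.
    assert (Hq0 : q <= 0) by nra.
    assert (Hup1 : - q <= P * l).
    { apply (Rmult_le_reg_r (a * g)); [nra|].
      replace (- q * (a * g)) with (- g * z) by (rewrite <- Hq; ring).
      replace (P * l * (a * g)) with (u * (- Lam)) by (rewrite <- HP, <- Hgl; ring).
      unfold a in *; nra. }
    assert (Hlo1 : u * L <= P * l ^ 2).
    { apply (Rmult_le_reg_r (a * g ^ 2)); [nra|].
      replace (P * l ^ 2 * (a * g ^ 2)) with (u * Lam ^ 2) by (rewrite <- HP; replace Lam with (- (g * l)) by lra; ring).
      replace (u * L * (a * g ^ 2)) with (u * (a * (g ^ 2 * L))) by ring. rewrite HL.
      apply Rmult_le_compat_l; [lra|].
      replace (a * (Lam - g * q)) with (a * Lam - g * z) by (rewrite <- Hq; ring).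
      assert (a * (1 - Lam) >= (1 + Lam) * (1 - Lam)) by nra. unfold a in *; nra. }
    assert (P * M >= P * l) by (apply Rle_ge, Rmult_le_compat_l; lra).
    assert (P * M >= P * l ^ 2) by (apply Rle_ge, Rmult_le_compat_l; lra).
    apply Rabs_le. split; nra.
  -
    assert (Hgn : g < 0) by lra.
    assert (Ha1 : 1 <= a) by (unfold a; nra).
    assert (HLam : 0 <= Lam) by (destruct (Rle_or_lt 0 Lam); auto; nra).
    assert (Hl0 : 0 <= l) by (destruct (Rle_or_lt 0 l); auto; nra).
    assert (Hu1 : 1 <= u) by nra.
    pose proof (Rmax_l (l ^ 2) l). pose proof (Rmax_r (l ^ 2) l).
    set (M := Rmax _ _) in *.
    assert (Hq0 : q <= 0) by nra.
    assert (Hup1 : - q <= l).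
    { assert (- q * (- g) <= l * (- g)); [|nra].
      replace (l * (- g)) with Lam by lra. nra. }
    assert (Hlo1 : L <= l ^ 2).
    { apply (Rmult_le_reg_l (g ^ 2)); [lra|].
      replace (g ^ 2 * l ^ 2) with (Lam ^ 2) by (replace Lam with (- (g * l)) by lra; ring).
      rewrite HL.
      apply (Rmult_le_reg_l a); [lra|].
      replace (a * (Lam - g * q)) with (a * Lam - g * z) by (rewrite <- Hq; ring).
      assert (0 <= Lam) by nra.
      assert (Lam - 1 - Lam ^ 2 < 0) by nra.
      assert (0 <= (a - (1 + Lam)) * (- (Lam - 1 - Lam ^ 2))) by (apply Rmult_le_pos; lra).
      assert (a * (Lam - 1 - Lam ^ 2) <= (1 + Lam) * (Lam - 1 - Lam ^ 2)) by nra.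
      unfold a in *; nra. }
    assert (u * M >= u * l) by (apply Rle_ge, Rmult_le_compat_l; lra).
    assert (u * M >= u * l ^ 2) by (apply Rle_ge, Rmult_le_compat_l; lra).
    apply Rabs_le. split; nra.
Qed.
Lemma case0 z :
  let E := exp (- z) in
  let d := Rabs ((1 - E) * (z ^ 2 / 2) - z / (1 + 0 * z)) in
  (0 <= z -> d <= Rmax (z ^ 2 / 2) z) /\
  (0 <= z -> d <= Rmax (z ^ 2) z / (1 + 0 * z)) /\
  (z <= 0 -> d <= Rpower E (1 + 0) * Rmax (ln E ^ 2) (ln E)) /\
  (z <= 0 -> d <= E * Rmax (ln E ^ 2) (ln E)).
Proof.
  intros E d. unfold d.
  replace (1 + 0 * z) with 1 by ring. rewrite Rplus_0_r.
  assert (HE : 0 < E) by apply exp_pos.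
  assert (H1 : exp z >= 1 + z) by (pose proof (exp_ineq1_le z); lra).
  assert (H2 : E >= 1 - z) by (pose proof (exp_ineq1_le (- z)); unfold E; lra).
  assert (H3 : E * exp z = 1) by (unfold E; rewrite <- exp_plus; replace (-z+z) with 0 by ring; apply exp_0).
  assert (Hl : ln E = - z) by (unfold E; apply ln_exp).
  rewrite Rpower_1 by lra. rewrite Hl. rewrite Rdiv_1_r.
  split; [|split; [|split]]; intros Hz.
  - assert (E <= 1) by nra. pose proof (Rmax_l (z^2/2) z). pose proof (Rmax_r (z^2/2) z).
    apply Rabs_le. split; nra.
  - assert (E <= 1) by nra. pose proof (Rmax_l (z^2) z). pose proof (Rmax_r (z^2) z).
    apply Rabs_le. split; nra.
  - assert (E >= 1) by nra. pose proof (Rmax_l ((-z)^2) (-z)). pose proof (Rmax_r ((-z)^2) (-z)).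
    set (M := Rmax _ _) in *.
    assert (E * M >= E * (-z)) by (apply Rle_ge, Rmult_le_compat_l; lra).
    assert (E * M >= E * (z^2)) by (apply Rle_ge, Rmult_le_compat_l; nra).
    apply Rabs_le. split; nra.
  - assert (E >= 1) by nra. pose proof (Rmax_l ((-z)^2) (-z)). pose proof (Rmax_r ((-z)^2) (-z)).
    set (M := Rmax _ _) in *.
    assert (E * M >= E * (-z)) by (apply Rle_ge, Rmult_le_compat_l; lra).
    assert (E * M >= E * (z^2)) by (apply Rle_ge, Rmult_le_compat_l; nra).
    apply Rabs_le. split; nra.
Qed.
Theorem lemmaB4 (g mu sigma x : R) :
  0 < sigma ->
  0 < 1 + g * zstd mu sigma x ->
  let z := zstd mu sigma x in
  let u := u_gam g z in
  let d := Rabs (dgamma_ell g mu sigma x) in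
  (* case gamma >= 0, z >= 0; gamma = 0 uses the +infinity convention *)
  (g = 0 -> 0 <= z -> d <= Rmax (z ^ 2 / 2) z) /\
  (0 < g -> 0 <= z ->
     d <= Rmax (Rmin (z ^ 2 / 2) (/ g ^ 2 * ln (1 + g * z))) (Rmin z (/ g))) /\
  (* case gamma <= 0, z >= 0 *)
  (g <= 0 -> 0 <= z -> d <= Rmax (z ^ 2) z / (1 + g * z)) /\
  (* case gamma >= 0, z <= 0 *)
  (0 <= g -> z <= 0 -> d <= Rpower u (1 + g) * Rmax (ln u ^ 2) (ln u)) /\
  (* case gamma <= 0, z <= 0 *)
  (g <= 0 -> z <= 0 -> d <= u * Rmax (ln u ^ 2) (ln u)).
Proof.
  intros Hs Ha. cbv zeta. unfold dgamma_ell. cbv zeta.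
  revert Ha. generalize (zstd mu sigma x) as Z. intros Z Ha.
  unfold u_gam, dlogu. destruct (Req_EM_T g 0) as [Hg|Hg].
  - subst g. destruct (case0 Z) as [A [B [C D]]].
    split; [intros; auto|split; [intros; lra|split; [intros; auto|split; intros; auto]]].
  - destruct (caseg g Z Hg Ha) as [A [B [C D]]].
    split; [intros; contradiction|split; [exact A|split; [exact B|split; [exact C|exact D]]]].
Qed.
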